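(* Let $S$ be a finite-dimensional operator system with $S^{sa}=S^+-S^+$. Then $S$ contains a matrix order unit: there is $e\in S^+$ such that for every $n\ge1$ and every $X\in M_n(S)^{sa}$ there is $\lambda>0$ with $\lambda(1_n\otimes e)\pm X\ge0$ in $M_n(S)$.
   Context: An operator system here is a (possibly nonunital) norm-closed selfadjoint subspace $S\subseteq B(H)$ for a Hilbert space $H$, with $M_n(S)^+=M_n(S)\cap B(H^n)^+$; $1_n\otimes e$ is the diagonal matrix with $e$ in each diagonal entry. *)

(* Defs.v *)
From HB Require Import structures.
From mathcomp Require Import all_boot all_order all_algebra.
From mathcomp Require Import reals complex.
Set Implicit Arguments. Unset Strict Implicit. Unset Printing Implicit Defensive.
Import Order.TTheory GRing.Theory Num.Theory.
Local Open Scope ring_scope.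

Section OpSys.
Variables (R : realType) (H : lmodType R[i]) (ip : H -> H -> R[i]).

Definition nrm2 (x : H) : R[i] := ip x x.

Definition is_hilbert : Prop :=
  [/\ (forall (a : R[i]) (x y z : H), ip (a *: x + y) z = a * ip x z + ip y z),
      (forall x y : H, ip y x = (ip x y)^*),
      (forall x : H, 0 <= ip x x),
      (forall x : H, ip x x = 0 -> x = 0) &
      (forall u : nat -> H,
         (forall eps : R[i], 0 < eps -> exists N : nat, forall m n : nat,
              (N <= m)%N -> (N <= n)%N -> nrm2 (u m - u n) < eps) ->
         exists x : H, forall eps : R[i], 0 < eps -> exists N : nat,
              forall n : nat, (N <= n)%N -> nrm2 (u n - x) < eps)].

Definition bounded_op (T : H -> H) : Prop :=
  (forall (a : R[i]) (x y : H), T (a *: x + y) = a *: T x + T y) /\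
  exists M : R[i], forall x : H, nrm2 (T x) <= M * nrm2 x.

Definition op_subspace (S : (H -> H) -> Prop) : Prop :=
  [/\ (forall T, S T -> bounded_op T),
      S (fun _ => 0) &
      (forall (a : R[i]) T U, S T -> S U -> S (fun x => a *: T x + U x))].

Definition selfadjoint_set (S : (H -> H) -> Prop) : Prop :=
  forall T, S T -> exists U, S U /\ forall x y : H, ip (T x) y = ip x (U y).

Definition norm_closed (S : (H -> H) -> Prop) : Prop :=
  forall (u : nat -> (H -> H)) (T : H -> H), (forall k, S (u k)) -> bounded_op T ->
    (forall eps : R[i], 0 < eps -> exists N : nat, forall k : nat, (N <= k)%N ->
        forall x : H, nrm2 (u k x - T x) <= eps * nrm2 x) ->
    S T.

Definition finite_dim (S : (H -> H) -> Prop) : Prop :=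
  exists (d : nat) (b : 'I_d -> (H -> H)), (forall i, S (b i)) /\
    forall T, S T -> exists c : 'I_d -> R[i], T = fun x => \sum_(i < d) c i *: b i x.

Definition operator_system (S : (H -> H) -> Prop) : Prop :=
  [/\ op_subspace S, selfadjoint_set S & norm_closed S].

(* n x n matrices over S, viewed as operators on H^n := 'I_n -> H;
   (X v)_i = \sum_j X i j (v j). *)
Definition mat_in (S : (H -> H) -> Prop) n (X : 'I_n -> 'I_n -> (H -> H)) : Prop :=
  forall i j, S (X i j).

Definition mat_pos n (X : 'I_n -> 'I_n -> (H -> H)) : Prop :=
  forall v : 'I_n -> H, 0 <= \sum_(i < n) \sum_(j < n) ip (X i j (v j)) (v i).

Definition mat_sa n (X : 'I_n -> 'I_n -> (H -> H)) : Prop :=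
  forall v w : 'I_n -> H,
    \sum_(i < n) \sum_(j < n) ip (X i j (w j)) (v i) =
    \sum_(j < n) \sum_(i < n) ip (w j) (X j i (v i)).

Definition diag_op n (e : H -> H) : 'I_n -> 'I_n -> (H -> H) :=
  fun i j => if i == j then e else (fun _ => 0).

Definition op_pos (T : H -> H) : Prop := forall x : H, 0 <= ip (T x) x.
Definition op_sa (T : H -> H) : Prop := forall x y : H, ip (T x) y = ip x (T y).

End OpSys.

(* Main.v *)
Require Import Defs.
From HB Require Import structures.
From mathcomp Require Import all_boot all_order all_algebra.
From mathcomp Require Import reals complex.
From mathcomp Require Import ring.
From Stdlib Require Import FunctionalExtensionality.
Import Order.TTheory GRing.Theory Num.Theory.
Local Open Scope ring_scope.
Lemma ipD {R : realType} {H : lmodType R[i]} {ip : H -> H -> R[i]} :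
  is_hilbert ip -> forall x y z, ip (x + y) z = ip x z + ip y z.
Proof. by case=> L _ _ _ _ x y z; rewrite -[x]scale1r L mul1r scale1r. Qed.

Lemma ip0 {R : realType} {H : lmodType R[i]} {ip : H -> H -> R[i]} :
  is_hilbert ip -> forall z, ip 0 z = 0.
Proof.
move=> hH z; have h := ipD hH 0 0 z; rewrite addr0 in h.
by apply: (addrI (ip 0 z)); rewrite addr0 -h.
Qed.

Lemma ipZ {R : realType} {H : lmodType R[i]} {ip : H -> H -> R[i]} :
  is_hilbert ip -> forall a x z, ip (a *: x) z = a * ip x z.
Proof.
move=> hH a x z; have [L _ _ _ _] := hH.
by rewrite -[a *: x]addr0 L ip0 // addr0.
Qed.

Lemma ip_sum {R : realType} {H : lmodType R[i]} {ip : H -> H -> R[i]} :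
  is_hilbert ip -> forall (I : Type) (s : seq I) (P : pred I) (F : I -> H) z,
  ip (\sum_(k <- s | P k) F k) z = \sum_(k <- s | P k) ip (F k) z.
Proof.
move=> hH I s P F z.
apply: (big_morph (fun x => ip x z)); [exact: (fun x y => ipD hH x y z) | exact: ip0].
Qed.

Lemma ipC {R : realType} {H : lmodType R[i]} {ip : H -> H -> R[i]} :
  is_hilbert ip -> forall x y, ip x y = (ip y x)^*.
Proof. by case=> _ S _ _ _ x y; rewrite S. Qed.

Lemma ip_linr {R : realType} {H : lmodType R[i]} {ip : H -> H -> R[i]} :
  is_hilbert ip -> forall a x y z, ip z (a *: x + y) = a^* * ip z x + ip z y.
Proof.
move=> hH a x y z; have [L _ _ _ _] := hH.
by rewrite ipC // L rmorphD rmorphM /= -!ipC.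
Qed.

Definition lin {R : realType} {H : lmodType R[i]} (T : H -> H) :=
  forall a x y, T (a *: x + y) = a *: T x + T y.

Lemma linD {R : realType} {H : lmodType R[i]} {T : H -> H} :
  lin T -> forall x y, T (x + y) = T x + T y.
Proof. by rewrite /lin => L x y; rewrite -[x]scale1r L !scale1r. Qed.

Lemma lin0 {R : realType} {H : lmodType R[i]} {T : H -> H} :
  lin T -> T 0 = 0.
Proof.
move=> L; have h := linD L 0 0; rewrite addr0 in h.
by apply: (addrI (T 0)); rewrite addr0 -h.
Qed.

Lemma linZ {R : realType} {H : lmodType R[i]} {T : H -> H} :
  lin T -> forall a x, T (a *: x) = a *: T x.
Proof. by move=> L a x; rewrite -[a *: x]addr0 (L a x 0) lin0 // addr0. Qed.

Lemma keyineq {R : realType} {H : lmodType R[i]} {ip : H -> H -> R[i]} (P : H -> H) :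
  is_hilbert ip -> lin P -> op_pos ip P -> op_sa ip P -> forall c x y,
  0 <= c * c^* * ip (P x) x + ip (P y) y + (c * ip (P x) y + (c * ip (P x) y)^*).
Proof.
move=> hH L Pp Ps c x y.
have := Pp (c *: x + y); rewrite L. rewrite (ipD hH). rewrite (ipZ hH) !(ip_linr hH).
rewrite [ip (P y) x]Ps [ip y (P x)]ipC // rmorphM /=.
set A := ip (P x) x; set B := ip (P y) y; set z := ip (P x) y.
suff -> : c * (c^* * A + z) + (c^* * z^* + B) =
   c * c^* * A + B + (c * z + c^* * z^*) by [].
ring.
Qed.

Lemma single_le {R : realType} {I : finType} (F : I -> R[i]) (k : I) :
  (forall k, 0 <= F k) -> F k <= \sum_k F k.
Proof.
move=> h; rewrite (bigD1 k) //= lerDl; exact: sumr_ge0.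
Qed.

Lemma mainbound {R : realType} {H : lmodType R[i]} {ip : H -> H -> R[i]}
  (hH : is_hilbert ip) (I : finType) (P : I -> H -> H)
  (hL : forall k, lin (P k)) (hP : forall k, op_pos ip (P k))
  (hS : forall k, op_sa ip (P k))
  n (c : 'I_n -> 'I_n -> I -> R[i]) (v : 'I_n -> H) :
  let Z := \sum_(i < n) \sum_(j < n) ip (\sum_k c i j k *: P k (v j)) (v i) in
  let Q := \sum_(i < n) \sum_k ip (P k (v i)) (v i) in
  let M := \sum_(i < n) \sum_(j < n) \sum_k (c i j k * (c i j k)^* + 1) in
  Z^* = Z -> [/\ 0 < M + 1, 0 <= (M + 1) * Q + Z & 0 <= (M + 1) * Q - Z].
Proof.
move=> Z Q M hZ.
have Qge : forall j k, ip (P k (v j)) (v j) <= Q.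
  move=> j k; apply: (le_trans (single_le (fun k => ip (P k (v j)) (v j)) k _)).
    by move=> k'; exact: hP.
  apply: (single_le (fun j => \sum_k ip (P k (v j)) (v j))).
  move=> j'; apply: sumr_ge0 => k' _; exact: hP.
have Q0 : 0 <= Q.
  apply: sumr_ge0 => j _; apply: sumr_ge0 => k _; exact: hP.
have M0 : 0 <= M.
  apply: sumr_ge0 => i _; apply: sumr_ge0 => j _; apply: sumr_ge0 => k _.
  by apply: addr_ge0 => //; exact: mul_conjC_ge0.
pose w i j k := c i j k * ip (P k (v j)) (v i).
have Zexp : Z = \sum_(i < n) \sum_(j < n) \sum_k w i j k.
  apply: eq_bigr => i _; apply: eq_bigr => j _.
  rewrite (ip_sum hH); apply: eq_bigr => k _; exact: (ipZ hH).
have term : forall (s : R[i]) i j k, s = 1 \/ s = -1 ->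
   0 <= (c i j k * (c i j k)^* + 1) * Q + s * (w i j k + (w i j k)^*).
  move=> s i j k hs.
  have hk := keyineq (P k) hH (hL k) (hP k) (hS k) (s * c i j k) (v j) (v i).
  have ss : s * s^* = 1 by case: hs => ->; rewrite ?rmorphN rmorph1 ?mulrNN mulr1.
  have sr : s^* = s by case: hs => ->; rewrite ?rmorphN rmorph1.
  rewrite !rmorphM /= sr in hk.
  set A := ip (P k (v j)) (v j) in hk; set B := ip (P k (v i)) (v i) in hk.
  have ss' : s * s = 1 by rewrite -{2}sr.
  have -> : (c i j k * (c i j k)^* + 1) * Q + s * (w i j k + (w i j k)^*) =
    (s * c i j k * (s * (c i j k)^*) * A + B +
       (s * c i j k * ip (P k (v j)) (v i) + s * (c i j k)^* * (ip (P k (v j)) (v i))^*))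
    + (c i j k * (c i j k)^* * (Q - A) + (Q - B)).
    rewrite /w rmorphM /=.
    have -> : s * c i j k * (s * (c i j k)^*) = s * s * (c i j k * (c i j k)^*) by ring.
    rewrite ss'; ring.
  apply: addr_ge0 => //; apply: addr_ge0.
    by apply: mulr_ge0; [exact: mul_conjC_ge0 | rewrite subr_ge0 Qge].
  by rewrite subr_ge0 Qge.
have sumeq : forall s : R[i], M * Q + s * (Z + Z^*) =
   \sum_(i < n) \sum_(j < n) \sum_k ((c i j k * (c i j k)^* + 1) * Q + s * (w i j k + (w i j k)^*)).
  move=> s; rewrite Zexp rmorph_sum /= -big_split /= mulr_suml mulr_sumr -big_split /=.
  apply: eq_bigr => i _; rewrite rmorph_sum /= -big_split /= mulr_suml mulr_sumr -big_split /=.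
  apply: eq_bigr => j _; rewrite rmorph_sum /= -big_split /= mulr_suml mulr_sumr -big_split /=.
  by apply: eq_bigr => k _.
have pos : forall s : R[i], s = 1 \/ s = -1 -> 0 <= M * Q + s * (Z + Z^*).
  move=> s hs; rewrite sumeq; apply: sumr_ge0 => i _; apply: sumr_ge0 => j _.
  apply: sumr_ge0 => k _; exact: term.
have fin : forall s : R[i], s = 1 \/ s = -1 -> 0 <= (M + 1) * Q + s * Z.
  move=> s hs; rewrite -(pmulr_rge0 _ (ltr0n _ 2)).
  have -> : 2%:R * ((M + 1) * Q + s * Z) = (M * Q + s * (Z + Z^*)) + (M + 2%:R) * Q.
    rewrite hZ; ring.
  apply: addr_ge0; first exact: pos.
  by apply: mulr_ge0 => //; apply: addr_ge0.
split.
- exact: (ltr_wpDl M0 ltr01).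
- by have := fin 1 (or_introl erefl); rewrite mul1r.
- by have := fin (-1) (or_intror erefl); rewrite mulN1r.
Qed.

Lemma ip_Dr {R : realType} {H : lmodType R[i]} {ip : H -> H -> R[i]} :
  is_hilbert ip -> forall x y z, ip z (x + y) = ip z x + ip z y.
Proof. by move=> hH x y z; rewrite -[x]scale1r (ip_linr hH) rmorph1 mul1r !scale1r. Qed.

Lemma ip_Zr {R : realType} {H : lmodType R[i]} {ip : H -> H -> R[i]} :
  is_hilbert ip -> forall a x z, ip z (a *: x) = a^* * ip z x.
Proof.
move=> hH a x z; rewrite -[a *: x]addr0 (ip_linr hH).
by rewrite [ip z 0]ipC // ip0 // rmorph0 addr0.
Qed.

Lemma ipN {R : realType} {H : lmodType R[i]} {ip : H -> H -> R[i]} :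
  is_hilbert ip -> forall x z, ip (- x) z = - ip x z.
Proof. by move=> hH x z; rewrite -scaleN1r (ipZ hH) mulN1r. Qed.

Lemma Scomb {R : realType} {H : lmodType R[i]} {ip : H -> H -> R[i]} {S : (H -> H) -> Prop} :
  op_subspace ip S -> forall a b T U, S T -> S U -> S (fun x => a *: T x + b *: U x).
Proof.
case=> _ S0 Sc a b T U hT hU.
have h1 := Sc b U (fun _ => 0) hU S0.
have e : (fun x => b *: U x + (fun _ : H => (0 : H)) x) = (fun x => b *: U x).
  by apply: functional_extensionality => x; rewrite addr0.
rewrite e in h1; exact: (Sc a T _ hT h1).
Qed.

Lemma Ssum {R : realType} {H : lmodType R[i]} {ip : H -> H -> R[i]} {S : (H -> H) -> Prop}
  (I : Type) (F : I -> H -> H) :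
  op_subspace ip S -> (forall k, S (F k)) -> forall s : seq I,
  S (fun x => \sum_(k <- s) F k x).
Proof.
move=> hS hF; elim=> [|a s IH].
  have -> : (fun x => \sum_(k <- [::]) F k x) = (fun _ => 0).
    by apply: functional_extensionality => x; rewrite big_nil.
  by case: hS.
have -> : (fun x => \sum_(k <- a :: s) F k x) =
   (fun x => 1 *: F a x + 1 *: (fun x => \sum_(k <- s) F k x) x).
  by apply: functional_extensionality => x; rewrite big_cons !scale1r.
exact: (Scomb hS 1 1 (F a) (fun x => \sum_(k <- s) F k x) (hF a) IH).
Qed.

Lemma decomp {R : realType} {H : lmodType R[i]} {ip : H -> H -> R[i]} {S : (H -> H) -> Prop} :
  is_hilbert ip -> operator_system ip S ->
  (forall T : H -> H, (S T /\ op_sa ip T) <->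
     exists P Q : H -> H, [/\ S P, op_pos ip P, S Q, op_pos ip Q &
                           T = (fun x => P x - Q x)]) ->
  forall b, S b -> exists F : 'I_4 -> H -> H, exists g : 'I_4 -> R[i],
    (forall l, S (F l) /\ op_pos ip (F l)) /\ b = (fun x => \sum_(l < 4) g l *: F l x).
Proof.
move=> hH [hsub hsa _] hiff b hb.
have [U [hU hbU]] := hsa b hb.
have hUb : forall x y, ip (U x) y = ip x (b y).
  by move=> x y; rewrite ipC // -hbU -ipC.
pose A := fun x => 1 *: b x + 1 *: U x.
pose B := fun x => 'i *: b x + (- 'i) *: U x.
have SA : S A by exact: (Scomb hsub).
have SB : S B by exact: (Scomb hsub).
have saA : op_sa ip A.
  move=> x y; rewrite /A (ipD hH) !(ipZ hH) (ip_Dr hH) !(ip_Zr hH) hbU hUb rmorph1.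
  by rewrite addrC.
have saB : op_sa ip B.
  move=> x y; rewrite /B (ipD hH) !(ipZ hH) (ip_Dr hH) !(ip_Zr hH) hbU hUb.
  rewrite rmorphN /= !conjCi opprK; by rewrite addrC.
have [P1 [Q1 [hP1 pP1 hQ1 pQ1 eA]]] := (proj1 (hiff A)) (conj SA saA).
have [P2 [Q2 [hP2 pP2 hQ2 pQ2 eB]]] := (proj1 (hiff B)) (conj SB saB).
exists (fun l : 'I_4 => nth P1 [:: P1; Q1; P2; Q2] l).
exists (fun l : 'I_4 => nth 0 [:: 2^-1; - 2^-1; - ('i / 2%:R); - - ('i / 2%:R)] l).
split.
  by case=> [[|[|[|[|m]]]] hl] //=.
apply: functional_extensionality => x.
rewrite !big_ord_recl big_ord0 /= addr0 !scaleNr.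
rewrite (_ : _ + _ = 2^-1 *: (P1 x - Q1 x) + (- ('i / 2%:R)) *: (P2 x - Q2 x)); last first.
  by rewrite !scalerBr !scaleNr !addrA.
have eAx : P1 x - Q1 x = A x by rewrite eA.
have eBx : P2 x - Q2 x = B x by rewrite eB.
rewrite eAx eBx /A /B !scalerDr !scalerA.
have hi : 'i * 'i = -1 :> R[i] by exact: mulCii.
rewrite addrACA -!scalerDl.
have -> : 2^-1 * 1 + - ('i / 2%:R) * 'i = 1 :> R[i].
  have -> : - ('i / 2%:R) * 'i = - ('i * 'i) / 2%:R :> R[i] by ring.
  by rewrite hi opprK; field.
have -> : 2^-1 * 1 + - ('i / 2%:R) * - 'i = 0 :> R[i].
  have -> : - ('i / 2%:R) * - 'i = ('i * 'i) / 2%:R :> R[i] by ring.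
  by rewrite hi; field.
by rewrite scale1r scale0r addr0.
Qed.

Theorem lemma8p5 (R : realType) (H : lmodType R[i]) (ip : H -> H -> R[i])
  (S : (H -> H) -> Prop) :
  is_hilbert ip ->
  operator_system ip S ->
  finite_dim S ->
  (* S^sa = S^+ - S^+ *)
  (forall T : H -> H, (S T /\ op_sa ip T) <->
     exists P Q : H -> H, [/\ S P, op_pos ip P, S Q, op_pos ip Q &
                           T = (fun x => P x - Q x)]) ->
  exists e : H -> H, [/\ S e, op_pos ip e &
    forall (n : nat) (X : 'I_n -> 'I_n -> (H -> H)),
      (1 <= n)%N -> mat_in S X -> mat_sa ip X ->
      exists lambda : R[i], [/\ 0 < lambda,
        mat_pos ip (fun i j x => lambda *: diag_op e i j x + X i j x) &
        mat_pos ip (fun i j x => lambda *: diag_op e i j x - X i j x)]].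
Proof.
move=> hH hOS [d [b [hbS hspan]]] hiff.
have [hsub hsa hcl] := hOS.
have hdec := decomp hH hOS hiff.
have [F hF] := fin_all_exists (fun i => hdec (b i) (hbS i)).
have [g hg] := fin_all_exists hF.
pose I := ('I_d * 'I_4)%type.
pose Pf (p : I) := F p.1 p.2.
have PS : forall p, S (Pf p) by move=> p; have [/(_ p.2) [] ] := hg p.1.
have Ppos : forall p, op_pos ip (Pf p) by move=> p; have [/(_ p.2) [] ] := hg p.1.
have Psa : forall p, op_sa ip (Pf p).
  move=> p; suff h : S (Pf p) /\ op_sa ip (Pf p) by exact: (proj2 h).
  apply/hiff; exists (Pf p), (fun _ => 0); split => //.
  - by case: hsub.
  - by move=> x; rewrite (ip0 hH).
  - by apply: functional_extensionality => x; rewrite subr0.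
have Plin : forall p, lin (Pf p) by move=> p; have [/(_ _ (PS p)) [] ] := hsub.
have span : forall T, S T -> exists c : I -> R[i], T = fun x => \sum_p c p *: Pf p x.
  move=> T /hspan [c ->]; exists (fun p => c p.1 * g p.1 p.2).
  apply: functional_extensionality => x.
  rewrite -(pair_bigA _ (fun i l => (c i * g i l) *: F i l x)) /=.
  apply: eq_bigr => i _; have [_ ->] := hg i.
  rewrite scaler_sumr; apply: eq_bigr => l _; by rewrite scalerA.
pose e := fun x => \sum_p Pf p x.
exists e; split.
- exact: (Ssum _ Pf hsub PS (index_enum _)).
- by move=> x; rewrite /e (ip_sum hH); apply: sumr_ge0 => p _; exact: Ppos.
move=> n X _ hX hXsa.
have hc1 : forall i j, exists c : I -> R[i], X i j = fun x => \sum_p c p *: Pf p x.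
  by move=> i j; exact: span.
have [c hc] := fin_all_exists (fun i => fin_all_exists (hc1 i)).
have eX : X = (fun i j => fun x => \sum_p c i j p *: Pf p x).
  by do 2 (apply: functional_extensionality => ?); exact: hc.
subst X.
pose M := \sum_(i < n) \sum_(j < n) \sum_p (c i j p * (c i j p)^* + 1).
have Zreal : forall v : 'I_n -> H,
  (\sum_(i < n) \sum_(j < n) ip (\sum_p c i j p *: Pf p (v j)) (v i))^* =
   \sum_(i < n) \sum_(j < n) ip (\sum_p c i j p *: Pf p (v j)) (v i).
  move=> v; have h := hXsa v v; simpl in h.
  rewrite rmorph_sum /=; under eq_bigr => i _ do rewrite rmorph_sum /=.
  under eq_bigr => i _ do under eq_bigr => j _ do rewrite -(ipC hH).
  by rewrite h.
have diag_sum : forall (v : 'I_n -> H) i,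
  \sum_(j < n) ip (diag_op e i j (v j)) (v i) = ip (e (v i)) (v i).
  move=> v i; rewrite (bigD1 i) //= /diag_op eqxx big1 ?addr0 // => j hj.
  by rewrite eq_sym (negbTE hj) (ip0 hH).
have bnd := fun v => mainbound hH _ Pf Plin Ppos Psa _ c v (Zreal v).
cbv zeta in bnd.
have Qe : forall v : 'I_n -> H, \sum_(i < n) ip (e (v i)) (v i) =
   \sum_(i < n) \sum_p ip (Pf p (v i)) (v i).
  by move=> v; apply: eq_bigr => i _; rewrite /e (ip_sum hH).
exists (M + 1); split.
- by have [] := bnd (fun _ => 0).
- move=> v /=; have [_ h _] := bnd v.
  under eq_bigr => i _ do (under eq_bigr => j _ do rewrite (ipD hH) (ipZ hH);
     rewrite big_split /= -mulr_sumr diag_sum).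
  by rewrite big_split /= -mulr_sumr Qe.
- move=> v /=; have [_ _ h] := bnd v.
  under eq_bigr => i _ do (under eq_bigr => j _ do rewrite (ipD hH) (ipZ hH) (ipN hH);
     rewrite big_split /= -mulr_sumr diag_sum sumrN).
  by rewrite big_split /= -mulr_sumr Qe sumrN.
Qed.
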